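(* Let $k\geq3$, $A=\{0,1,\dots,k-1\}$, $N=k-1$ and let $T\colon A^{N^2}\to A$ be given by $T(x_{1,1},\dots,x_{1,N},\dots,x_{N,1},\dots,x_{N,N})=1$ if $x_{i,j}=i$ for all $i,j$ or $x_{i,j}=j$ for all $i,j$, and $0$ otherwise. For $j\in A$ and $a\in A$ let $u_{j,a}\colon A\to A$ be given by $u_{j,a}(x)=a$ if $x=j$ and $u_{j,a}(x)=0$ otherwise. Then \[\{T\}^{*(1)}\supseteq\{u_{j,a} : a\in A,\ j\in A\setminus\{0,1\}\}.\]
   Context: An $m$-ary $g$ commutes with an $n$-ary $h$ if $g\bigl((h((x_{ij})_{j}))_{i}\bigr)=h\bigl((g((x_{ij})_{i}))_{j}\bigr)$ for all $(x_{ij})\in A^{m\times n}$. For $F$ a set of finitary operations on $A$, $F^*$ is the set of all finitary operations of positive arity commuting with every member of $F$, and $F^{*(1)}$ is the set of unary members of $F^*$. *)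

(* Defs.v *)
From mathcomp Require Import all_boot.
Set Implicit Arguments. Unset Strict Implicit. Unset Printing Implicit Defensive.

Definition op (A : Type) (m : nat) := ('I_m -> A) -> A.

Definition commutes (A : Type) (m n : nat) (g : op A m) (h : op A n) : Prop :=
  forall x : 'I_m -> 'I_n -> A,
    g (fun i => h (fun j => x i j)) = h (fun j => g (fun i => x i j)).

Definition opset (A : Type) := {m : nat & op A m} -> Prop.

Definition centralizer (A : Type) (F : opset A) : opset A :=
  fun p => 0 < projT1 p /\ forall q, F q -> commutes (projT2 p) (projT2 q).

Definition centralizer1 (A : Type) (F : opset A) : opset A :=
  fun p => centralizer F p /\ projT1 p = 1.

(* Here A = {0,...,k-1} = 'I_k with k = n.+1, so N = k - 1 = n. *)

(* T : A^(N^2) -> A; the argument index t : 'I_(n*n) encodes the pair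
   (i, j) = (t %/ n + 1, t %% n + 1), i.e. the row-major order
   x_{1,1},...,x_{1,N},...,x_{N,1},...,x_{N,N}. *)
Definition Top (n : nat) : op 'I_n.+1 (n * n) := fun x =>
  if [forall t : 'I_(n * n), nat_of_ord (x t) == (t %/ n).+1]
     || [forall t : 'I_(n * n), nat_of_ord (x t) == (t %% n).+1]
  then inord 1 else inord 0.

Definition uop (n : nat) (j a : 'I_n.+1) : op 'I_n.+1 1 := fun x =>
  if x ord0 == j then a else ord0.

(* Main.v *)
Require Import Defs.
From mathcomp Require Import all_boot.

Theorem corollary3p3 (n : nat) (hk : 3 <= n.+1) :
  forall (j a : 'I_n.+1), 2 <= nat_of_ord j ->
    centralizer1 (fun q => q = existT (op 'I_n.+1) (n * n) (@Top n))
                 (existT (op 'I_n.+1) 1 (uop j a)).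
Proof.
move=> j a hj; split; last by [].
split; first by [].
move=> q -> /= x.
have hn2 : 2 <= n by [].
have h0 : 0 < n * n by rewrite muln_gt0 (leq_trans _ hn2).
have h1 : 1 < n * n by apply: (leq_trans _ (leq_mul hn2 hn2)).
have hnn : n < n * n by rewrite -{1}(muln1 n) ltn_pmul2l ?(leq_trans _ hn2).
have Hz : forall (z : 'I_n.+1) (b : bool), (if b then inord 1 else inord 0 : 'I_n.+1) == z -> (z <= 1)%N.
  move=> z b /eqP <-; case: b; rewrite inordK //; exact: leq_trans hn2 _.
rewrite /uop /Top /=.
case: ifP => [/Hz hz|_]; first by move: (leq_trans hj hz).
case: ifP => [|_]; last by apply: val_inj; rewrite /= inordK.
case/orP => /forallP H.
- have := H (Ordinal h0); have := H (Ordinal hnn).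
  rewrite /= div0n divnn (leq_trans _ hn2) //.
  case: ifP => _; case: ifP => _ //= /eqP -> //.
- have := H (Ordinal h0); have := H (Ordinal h1).
  rewrite /= mod0n modn_small //.
  case: ifP => _; case: ifP => _ //= /eqP -> //.
Qed.
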